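(* Let $\mathbf{L}\colon\mathbb{R}^n\times\mathbb{R}^m\to\mathbb{R}$ be convex-concave and $L$-smooth, and write $\mathbb{A}=\nabla_{\pm}\mathbf{L}$. Fix $N\ge1$ and $0<\alpha\le\frac1L$. Given $x_0\in\mathbb{R}^n\times\mathbb{R}^m$ and $z_0=0$, define for $k=0,1,\dots,N-1$ (Dual Fast Extragradient) \[ \begin{aligned} x_{k+1/2}&=x_k-\alpha z_k-\alpha\mathbb{A}x_k,\\ x_{k+1}&=x_{k+1/2}-\tfrac{N-k-1}{N-k}\,\alpha\left(\mathbb{A}x_{k+1/2}-\mathbb{A}x_k\right),\\ z_{k+1}&=\tfrac{N-k-1}{N-k}\,z_k-\tfrac{1}{N-k}\,\mathbb{A}x_{k+1/2}. \end{aligned} \] Then for every saddle point $x_\star$ of $\mathbf{L}$ (equivalently $\nabla_\pm\mathbf{L}(x_\star)=0$), \[ \|\nabla\mathbf{L}(x_N)\|^2=\|\mathbb{A}x_N\|^2\le\frac{4\|x_0-x_\star\|^2}{\alpha^2N^2}. \]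
   Context: $\mathbf{L}$ is convex-concave if $\mathbf{L}(\cdot,v)$ is convex for each $v$ and $\mathbf{L}(u,\cdot)$ is concave for each $u$; it is $L$-smooth if differentiable with $L$-Lipschitz gradient. The saddle operator is $\nabla_\pm\mathbf{L}(u,v)=(\nabla_u\mathbf{L}(u,v),-\nabla_v\mathbf{L}(u,v))$, with joint variable $x=(u,v)$. *)

(* Defs.v *)
From HB Require Import structures.
From mathcomp Require Import all_boot all_order all_algebra.
From mathcomp Require Export reals.
Set Implicit Arguments. Unset Strict Implicit. Unset Printing Implicit Defensive.
Import Order.TTheory GRing.Theory Num.Theory.
Local Open Scope ring_scope.

Section Defs.
Variable R : realType.

Definition dotv (k : nat) (u v : 'rV[R]_k) : R := \sum_(i < k) u 0 i * v 0 i.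
Definition enorm (k : nat) (u : 'rV[R]_k) : R := Num.sqrt (dotv u u).

Definition is_gradient (k : nat) (f : 'rV[R]_k -> R) (g x : 'rV[R]_k) : Prop :=
  forall eps : R, 0 < eps -> exists2 delta : R, 0 < delta &
    forall h : 'rV[R]_k, enorm h < delta ->
      `|f (x + h) - f x - dotv g h| <= eps * enorm h.

Definition convex_fun (k : nat) (f : 'rV[R]_k -> R) : Prop :=
  forall (a b : 'rV[R]_k) (t : R), 0 <= t -> t <= 1 ->
    f (t *: a + (1 - t) *: b) <= t * f a + (1 - t) * f b.

Definition concave_fun (k : nat) (f : 'rV[R]_k -> R) : Prop :=
  convex_fun (fun x => - f x).

Definition convex_concave (n m : nat) (L : 'rV[R]_n -> 'rV[R]_m -> R) : Prop :=
  (forall v, convex_fun (fun u => L u v)) /\ (forall u, concave_fun (fun v => L u v)).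

Definition joint (n m : nat) (L : 'rV[R]_n -> 'rV[R]_m -> R) (x : 'rV[R]_(n + m)) : R :=
  L (lsubmx x) (rsubmx x).

(* saddle operator from the joint gradient G : grad_pm = (grad_u, - grad_v) *)
Definition saddle_op (n m : nat) (G : 'rV[R]_(n + m) -> 'rV[R]_(n + m))
  (x : 'rV[R]_(n + m)) : 'rV[R]_(n + m) :=
  row_mx (lsubmx (G x)) (- rsubmx (G x)).

Definition saddle_point (n m : nat) (L : 'rV[R]_n -> 'rV[R]_m -> R)
  (xs : 'rV[R]_(n + m)) : Prop :=
  forall u v, L (lsubmx xs) v <= L (lsubmx xs) (rsubmx xs) /\
              L (lsubmx xs) (rsubmx xs) <= L u (rsubmx xs).

Fixpoint dfe (p : nat) (A : 'rV[R]_p -> 'rV[R]_p) (alpha : R) (N : nat)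
  (x0 : 'rV[R]_p) (k : nat) : 'rV[R]_p * 'rV[R]_p :=
  match k with
  | 0 => (x0, 0)
  | k'.+1 =>
      let xz := dfe A alpha N x0 k' in
      let x := xz.1 in let z := xz.2 in
      let xh := x - alpha *: z - alpha *: A x in
      let c := (N - k' - 1)%:R / (N - k')%:R in
      (xh - (c * alpha) *: (A xh - A x), c *: z - ((N - k')%:R)^-1 *: A xh)
  end.

End Defs.

(* Main.v *)
Require Import Defs.
From mathcomp Require Import all_boot all_order all_algebra reals.
From mathcomp.algebra_tactics Require Import ring lra.
From mathcomp Require Import zify.
Set Implicit Arguments. Unset Strict Implicit. Unset Printing Implicit Defensive.
Import Order.TTheory GRing.Theory Num.Theory.
Local Open Scope ring_scope.

Section S.
Variable R : realType.
Implicit Types (p : nat).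

Ltac coord := rewrite /dotv; do 4 rewrite ?mulr_sumr ?mulr_suml -?sumrN -?big_split /=;
  apply: eq_bigr => i _; rewrite !mxE.

Lemma dotv_ge0 p (u : 'rV[R]_p) : 0 <= dotv u u.
Proof. by apply: sumr_ge0 => i _; rewrite -expr2 sqr_ge0. Qed.

Lemma enorm_ge0 p (u : 'rV[R]_p) : 0 <= enorm u.
Proof. exact: sqrtr_ge0. Qed.

Lemma enorm_sq p (u : 'rV[R]_p) : enorm u ^+ 2 = dotv u u.
Proof. by rewrite /enorm sqr_sqrtr // dotv_ge0. Qed.

Lemma dotvZr p (u v : 'rV[R]_p) t : dotv u (t *: v) = t * dotv u v.
Proof. by coord; ring. Qed.

Lemma dotv0r p (u : 'rV[R]_p) : dotv u 0 = 0.
Proof. by rewrite /dotv big1 // => i _; rewrite mxE mulr0. Qed.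

Lemma dotvBr p (u v w : 'rV[R]_p) : dotv u (v - w) = dotv u v - dotv u w.
Proof. by coord; ring. Qed.

Lemma dotvBl p (u v w : 'rV[R]_p) : dotv (v - w) u = dotv v u - dotv w u.
Proof. by coord; ring. Qed.

Lemma dotvNl p (u v : 'rV[R]_p) : dotv (- v) u = - dotv v u.
Proof. by coord; ring. Qed.

Lemma enormZ p (u : 'rV[R]_p) t : 0 <= t -> enorm (t *: u) = t * enorm u.
Proof.
move=> t0; rewrite /enorm.
have -> : dotv (t *: u) (t *: u) = t ^+ 2 * dotv u u by coord; ring.
by rewrite sqrtrM ?sqr_ge0 // sqrtr_sqr ger0_norm.
Qed.

Lemma dotv_row n m (a c : 'rV[R]_n) (b d : 'rV[R]_m) :
  dotv (row_mx a b) (row_mx c d) = dotv a c + dotv b d.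
Proof.
rewrite /dotv big_split_ord /=; congr (_ + _); apply: eq_bigr => i _;
  by rewrite ?row_mxEl ?row_mxEr.
Qed.

Lemma le_eps (a b c : R) : (forall e, 0 < e -> a <= b + e * c) -> 0 <= c -> a <= b.
Proof.
move=> H c0; apply/ler_addgt0Pr => e e0.
have c1 : 0 < c + 1 by lra.
have := H (e / (c + 1)) (divr_gt0 e0 c1).
have : e / (c + 1) * c <= e.
  by rewrite mulrAC ler_pdivrMr //; nra.
lra.
Qed.

Lemma grad_dir p (f : 'rV[R]_p -> R) g x h eps : is_gradient f g x -> 0 < eps ->
  exists2 t, 0 < t <= 1 & `|f (x + t *: h) - f x - t * dotv g h| <= eps * t * enorm h.
Proof.
move=> Hg e0; have [d d0 Hd] := Hg eps e0.
have eh := enorm_ge0 h.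
have e1 : 0 < enorm h + 1 by lra.
pose t := Num.min 1 (d / (enorm h + 1)).
have t0 : 0 < t by rewrite lt_min ltr01 divr_gt0.
have t1 : t <= 1 by rewrite ge_min lexx.
have tle : t <= d / (enorm h + 1) by rewrite ge_min lexx orbT.
exists t; first by rewrite t0 t1.
have : enorm (t *: h) < d.
  rewrite enormZ; last exact: ltW t0.
  apply: (le_lt_trans (ler_wpM2r eh tle)).
  rewrite mulrAC ltr_pdivrMr //; nra.
move/Hd; rewrite dotvZr enormZ; last exact: ltW t0.
by rewrite mulrA.
Qed.

Lemma core_cvx p (f : 'rV[R]_p -> R) g x h : is_gradient f g x ->
 (forall t, 0 < t -> t <= 1 -> f (x + t *: h) - f x <= t * (f (x + h) - f x)) ->
 dotv g h <= f (x + h) - f x.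
Proof.
move=> Hg Hc; apply: (@le_eps _ _ (enorm h)); last exact: enorm_ge0.
move=> e e0.
have [t /andP[t0 t1] Ht] := grad_dir h Hg e0.
have H := Hc t t0 t1.
move: Ht; rewrite ler_norml => /andP[Ha _].
rewrite -(ler_pM2l t0); nra.
Qed.

Lemma core_ccv p (f : 'rV[R]_p -> R) g x h : is_gradient f g x ->
 (forall t, 0 < t -> t <= 1 -> t * (f (x + h) - f x) <= f (x + t *: h) - f x) ->
 f (x + h) - f x <= dotv g h.
Proof.
move=> Hg Hc; apply: (@le_eps _ _ (enorm h)); last exact: enorm_ge0.
move=> e e0.
have [t /andP[t0 t1] Ht] := grad_dir h Hg e0.
have H := Hc t t0 t1.
move: Ht; rewrite ler_norml => /andP[_ Ha].
rewrite -(ler_pM2l t0); nra.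
Qed.

Lemma seg_id p (u d : 'rV[R]_p) t : t *: (u + d) + (1 - t) *: u = u + t *: d.
Proof. by apply/rowP => i; rewrite !mxE; ring. Qed.

Lemma grad_u n m (L : 'rV[R]_n -> 'rV[R]_m -> R) gx x d :
  is_gradient (joint L) gx x -> convex_fun (fun u => L u (rsubmx x)) ->
  dotv (lsubmx gx) d <= L (lsubmx x + d) (rsubmx x) - L (lsubmx x) (rsubmx x).
Proof.
move=> Hg Hc.
have E t : joint L (x + t *: row_mx d 0) = L (lsubmx x + t *: d) (rsubmx x).
  by rewrite /joint !linearD !linearZ /= row_mxKl row_mxKr scaler0 addr0.
have E1 : joint L (x + row_mx d 0) = L (lsubmx x + d) (rsubmx x).
  by rewrite -[row_mx d 0]scale1r E scale1r.
have Hd : dotv gx (row_mx d 0) = dotv (lsubmx gx) d.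
  by rewrite -{1}[gx]hsubmxK dotv_row dotv0r addr0.
have H := core_cvx (h := row_mx d 0) Hg; rewrite Hd E1 in H.
apply: H => t t0 t1.
rewrite E /joint; have := Hc (lsubmx x + d) (lsubmx x) t (ltW t0) t1.
rewrite seg_id; lra.
Qed.

Lemma grad_v n m (L : 'rV[R]_n -> 'rV[R]_m -> R) gx x d :
  is_gradient (joint L) gx x -> concave_fun (fun v => L (lsubmx x) v) ->
  L (lsubmx x) (rsubmx x + d) - L (lsubmx x) (rsubmx x) <= dotv (rsubmx gx) d.
Proof.
move=> Hg Hc.
have E t : joint L (x + t *: row_mx 0 d) = L (lsubmx x) (rsubmx x + t *: d).
  by rewrite /joint !linearD !linearZ /= row_mxKl row_mxKr scaler0 addr0.
have E1 : joint L (x + row_mx 0 d) = L (lsubmx x) (rsubmx x + d).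
  by rewrite -[row_mx 0 d]scale1r E scale1r.
have Hd : dotv gx (row_mx 0 d) = dotv (rsubmx gx) d.
  by rewrite -{1}[gx]hsubmxK dotv_row dotv0r add0r.
have H := core_ccv (h := row_mx 0 d) Hg; rewrite Hd E1 in H.
apply: H => t t0 t1.
rewrite E /joint; have := Hc (rsubmx x + d) (rsubmx x) t (ltW t0) t1.
rewrite seg_id; lra.
Qed.


Lemma addsubK p (u v : 'rV[R]_p) : u + (v - u) = v.
Proof. by rewrite addrC subrK. Qed.

Lemma mono n m (L : 'rV[R]_n -> 'rV[R]_m -> R) G x y :
  convex_concave L -> (forall x, is_gradient (joint L) (G x) x) ->
  0 <= dotv (saddle_op G x - saddle_op G y) (x - y).
Proof.
move=> [Hu Hv] Hg.
have h1 := grad_u (lsubmx y - lsubmx x) (Hg x) (Hu _).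
have h2 := grad_u (lsubmx x - lsubmx y) (Hg y) (Hu _).
have h3 := grad_v (rsubmx y - rsubmx x) (Hg x) (Hv _).
have h4 := grad_v (rsubmx x - rsubmx y) (Hg y) (Hv _).
rewrite !addsubK in h1 h2 h3 h4.
rewrite -[x - y]hsubmxK !linearB /= /saddle_op opp_row_mx add_row_mx dotv_row.
rewrite ?dotvBr ?dotvBl ?dotvNl ?dotvBr in h1 h2 h3 h4 *.
lra.
Qed.

Lemma mon_star n m (L : 'rV[R]_n -> 'rV[R]_m -> R) G x xs :
  convex_concave L -> (forall x, is_gradient (joint L) (G x) x) ->
  saddle_point L xs ->
  0 <= dotv (saddle_op G x) (x - xs).
Proof.
move=> [Hu Hv] Hg Hs.
have h1 := grad_u (lsubmx xs - lsubmx x) (Hg x) (Hu _).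
have h3 := grad_v (rsubmx xs - rsubmx x) (Hg x) (Hv _).
rewrite !addsubK in h1 h3.
have [s1 _] := Hs (lsubmx x) (rsubmx x).
have [_ s2] := Hs (lsubmx x) (rsubmx x).
have [s3 _] := Hs (lsubmx x) (rsubmx x).
have [t1 t2] := Hs (lsubmx x) (rsubmx x).
rewrite -[x - xs]hsubmxK !linearB /= /saddle_op dotv_row.
rewrite ?dotvBr ?dotvNl ?dotvBr in h1 h3 *.
lra.
Qed.

Lemma flip_sq n m (w1 w2 : 'rV[R]_(n + m)) :
  dotv (row_mx (lsubmx w1) (- rsubmx w1) - row_mx (lsubmx w2) (- rsubmx w2))
       (row_mx (lsubmx w1) (- rsubmx w1) - row_mx (lsubmx w2) (- rsubmx w2))
  = dotv (w1 - w2) (w1 - w2).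
Proof.
rewrite opp_row_mx add_row_mx dotv_row -[w1 - w2]hsubmxK dotv_row !linearB /=.
by congr (_ + _); rewrite /dotv; apply: eq_bigr => i _; rewrite !mxE; ring.
Qed.

Lemma flip_sq0 n m (w : 'rV[R]_(n + m)) :
  dotv (row_mx (lsubmx w) (- rsubmx w)) (row_mx (lsubmx w) (- rsubmx w))
  = dotv w w.
Proof.
have -> : dotv w w = dotv (row_mx (lsubmx w) (rsubmx w)) (row_mx (lsubmx w) (rsubmx w)).
  by rewrite hsubmxK.
rewrite !dotv_row.
by congr (_ + _); rewrite /dotv; apply: eq_bigr => i _; rewrite !mxE; ring.
Qed.

Lemma lip_sq n m (G : 'rV[R]_(n + m) -> 'rV[R]_(n + m)) Lc al x y :
  0 < Lc -> (forall x y, enorm (G x - G y) <= Lc * enorm (x - y)) ->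
  0 < al -> al <= 1 / Lc ->
  al ^+ 2 * dotv (saddle_op G y - saddle_op G x) (saddle_op G y - saddle_op G x)
  <= dotv (y - x) (y - x).
Proof.
move=> L0 Hl a0 aL.
rewrite /saddle_op flip_sq -!enorm_sq.
have := Hl y x; have e1 := enorm_ge0 (G y - G x); have e2 := enorm_ge0 (y - x).
have aL' : al * Lc <= 1 by rewrite -ler_pdivlMr.
move=> H.
have H2 : al * enorm (G y - G x) <= enorm (y - x) by nra.
have H3 : 0 <= al * enorm (G y - G x) by nra.
rewrite -exprMn; nra.
Qed.

Lemma last_id p (al : R) (x z ax ay : 'rV[R]_p) :
 al * dotv (x - (x - al *: z - al *: ax)) (z + ay) / 1
   - al ^+ 2 / 2 * dotv (z + ay) (z + ay)
 = (dotv ((x - al *: z - al *: ax) - x) ((x - al *: z - al *: ax) - x)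
    - al ^+ 2 * dotv (ay - ax) (ay - ax)) / 2.
Proof. by coord; field. Qed.

Lemma final_id p (al n : R) (x0 xs X g : 'rV[R]_p) : n != 0 ->
  dotv (x0 - xs) (x0 - xs) - (al * n / 2) ^+ 2 * dotv g g
  = dotv (x0 - xs - (al * n / 2) *: g) (x0 - xs - (al * n / 2) *: g)
    + n ^+ 2 * (al * dotv (x0 - X) (0 + g) / n - al ^+ 2 / 2 * dotv (0 + g) (0 + g))
    + al * n * dotv g (X - xs).
Proof. by move=> n0; coord; field. Qed.

Lemma step_id p (al r : R) (x z ax ay X g y x' z' : 'rV[R]_p) : r != 0 -> r - 1 != 0 ->
 y = x - al *: z - al *: ax ->
 x' = y - ((r - 1) / r * al) *: (ay - ax) ->
 z' = ((r - 1) / r) *: z - r^-1 *: ay ->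
 al * dotv (x - X) (z + g) / r - al ^+ 2 / 2 * dotv (z + g) (z + g)
 = al * dotv (x' - X) (z' + g) / (r - 1) - al ^+ 2 / 2 * dotv (z' + g) (z' + g)
   + (dotv (y - x) (y - x) - al ^+ 2 * dotv (ay - ax) (ay - ax)) / (2 * r ^+ 2)
   + al * dotv (g - ay) (X - y) / (r * (r - 1)).
Proof.
move=> r0 r10 -> -> ->.
by coord; field; rewrite r0 r10.
Qed.

End S.
Unset Implicit Arguments.

Theorem theorem6p1 (R : realType) (n m : nat)
  (L : 'rV[R]_n -> 'rV[R]_m -> R) (G : 'rV[R]_(n + m) -> 'rV[R]_(n + m))
  (Lc alpha : R) (N : nat) (x0 xs : 'rV[R]_(n + m)) :
  convex_concave L ->
  (forall x, is_gradient (joint L) (G x) x) ->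
  0 < Lc ->
  (forall x y, enorm (G x - G y) <= Lc * enorm (x - y)) ->
  (1 <= N)%N -> 0 < alpha -> alpha <= 1 / Lc ->
  saddle_point L xs ->
  let xN := (dfe (saddle_op G) alpha N x0 N).1 in
  enorm (G xN) ^+ 2 = enorm (saddle_op G xN) ^+ 2 /\
  enorm (saddle_op G xN) ^+ 2
    <= 4 * enorm (x0 - xs) ^+ 2 / (alpha ^+ 2 * (N%:R) ^+ 2).
Proof.
move=> Hcc Hg Lc0 Hlip N1 al0 alLc Hs xN.
split; first by rewrite !enorm_sq /saddle_op flip_sq0.
set A := saddle_op G.
pose xk k := (dfe A alpha N x0 k).1.
pose zk k := (dfe A alpha N x0 k).2.
pose gA := A xN.
pose psi k := alpha * dotv (xk k - xN) (zk k + gA) / (N - k)%:R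
  - alpha ^+ 2 / 2 * dotv (zk k + gA) (zk k + gA).
have Hl x y := lip_sq x y Lc0 Hlip al0 alLc.
have Hm x y := mono x y Hcc Hg.
have Hstep k : (k.+1 < N)%N -> psi k.+1 <= psi k.
  move=> hk.
  have r1 : ((N - k.+1)%:R : R) = (N - k)%:R - 1.
    have -> : (N - k.+1 = (N - k) - 1)%N by lia.
    by rewrite natrB //; lia.
  have c1 : ((N - k - 1)%:R : R) = (N - k)%:R - 1.
    by rewrite natrB //; lia.
  have rge : (2 : R) <= (N - k)%:R by rewrite (ler_nat R 2); lia.
  have rn0 : ((N - k)%:R : R) != 0 by apply/eqP => h; move: rge; rewrite h; lra.
  have r1n0 : ((N - k)%:R : R) - 1 != 0 by apply/eqP => h; lra.
  set y := xk k - alpha *: zk k - alpha *: A (xk k).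
  have E := @step_id R _ alpha (N - k)%:R (xk k) (zk k) (A (xk k)) (A y) xN gA y
    (xk k.+1) (zk k.+1) rn0 r1n0 erefl.
  have Ex : xk k.+1 = y - (((N - k)%:R - 1) / (N - k)%:R * alpha) *: (A y - A (xk k)).
    by rewrite /xk /= c1.
  have Ez : zk k.+1 = (((N - k)%:R - 1) / (N - k)%:R) *: zk k - ((N - k)%:R)^-1 *: A y.
    by rewrite /zk /= c1.
  rewrite /psi r1 (E Ex Ez).
  have T1 : 0 <= (dotv (y - xk k) (y - xk k) - alpha ^+ 2 * dotv (A y - A (xk k)) (A y - A (xk k)))
     / (2 * (N - k)%:R ^+ 2).
    apply: divr_ge0; first by rewrite subr_ge0; exact: Hl.
    by apply: mulr_ge0 => //; apply: sqr_ge0.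
  have T2 : 0 <= alpha * dotv (gA - A y) (xN - y) / ((N - k)%:R * ((N - k)%:R - 1)).
    apply: divr_ge0; first by apply: mulr_ge0; [exact: ltW | exact: Hm].
    by apply: mulr_ge0; lra.
  lra.
have Hlast k : k.+1 = N -> 0 <= psi k.
  move=> hk.
  have HxN : xN = xk k - alpha *: zk k - alpha *: A (xk k).
    rewrite /xN /xk /zk -hk /=.
    have c0 : ((k.+1 - k - 1)%:R : R) = 0 by rewrite subSnn subnn.
    by rewrite c0 !mul0r scale0r subr0.
  have Nk1 : (N - k = 1)%N by lia.
  rewrite /psi /gA HxN Nk1 mulr1n last_id.
  apply: divr_ge0 => //; rewrite subr_ge0; exact: Hl.
have Hpos j k : (k + j).+1 = N -> 0 <= psi k.
  elim: j k => [|j IH] k hk.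
    by apply: Hlast; rewrite addn0 in hk.
  have h1 : (k.+1 + j).+1 = N by lia.
  have h2 : (k.+1 < N)%N by lia.
  exact: le_trans (IH _ h1) (Hstep _ h2).
have P0 : 0 <= psi 0 by apply: (Hpos N.-1); lia.
rewrite /psi /xk /zk /= subn0 in P0.
have Ms : 0 <= dotv gA (xN - xs) := mon_star xN Hcc Hg Hs.
have Npos : (0 : R) < N%:R by rewrite ltr0n; lia.
have Nn0 : (N%:R : R) != 0 by apply/eqP => h; move: Npos; rewrite h; lra.
have F := @final_id R _ alpha N%:R x0 xs xN gA Nn0.
have Hw := dotv_ge0 (x0 - xs - (alpha * N%:R / 2) *: gA).
have sq : (alpha * N%:R / 2) ^+ 2 = alpha ^+ 2 * N%:R ^+ 2 / 4 by field.
rewrite sq in F.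
have h1 : 0 <= N%:R ^+ 2 * (alpha * dotv (x0 - xN) (0 + gA) / N%:R
   - alpha ^+ 2 / 2 * dotv (0 + gA) (0 + gA)) by apply: mulr_ge0 => //; apply: sqr_ge0.
have h2 : 0 <= alpha * N%:R * dotv gA (xN - xs).
  by apply: mulr_ge0 => //; apply: mulr_ge0; lra.
rewrite !enorm_sq ler_pdivlMr; last by apply: mulr_gt0; apply: exprn_gt0.
rewrite -/gA.
lra.
Qed.
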